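(* Let $G$ be a graph. If $G$ has a pan cycle $C$, then $\mathsf{pn}(G)=\mathsf{pn}(G-C)+1$, where $G-C$ denotes the graph obtained from $G$ by deleting all edges of $C$.
   Context: All graphs are finite, simple and undirected. A path partition of $G$ is a collection of pairwise edge-disjoint paths in $G$ whose edge sets together cover $E(G)$; $\mathsf{pn}(G)$ is the minimum size of a path partition. A pan cycle of $G$ is a cycle $C$ in $G$ containing a unique vertex $v$ with $\deg_G(v)=3$, while every other vertex $w$ of $C$ has $\deg_G(w)=2$. *)

(* Defs.v *)
From mathcomp Require Import all_boot.
From Stdlib Require Import ClassicalEpsilon.
Set Implicit Arguments. Unset Strict Implicit. Unset Printing Implicit Defensive.

(* A finite simple graph on vertex set T is given by its edge set
   E : {set {set T}}, every edge being a 2-element subset of T. *)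

Definition simple_edges (T : finType) (E : {set {set T}}) : Prop :=
  forall e, e \in E -> #|e| = 2.

Definition deg (T : finType) (E : {set {set T}}) (v : T) : nat :=
  #|[set e in E | v \in e]|.

Definition pedge (T : finType) (p : T * T) : {set T} := [set p.1; p.2].

Definition path_edges (T : finType) (s : seq T) : {set {set T}} :=
  [set pedge p | p in zip s (behead s)].

Definition is_gpath (T : finType) (E : {set {set T}}) (s : seq T) : bool :=
  [&& uniq s, 1 < size s & all (fun p => pedge p \in E) (zip s (behead s))].

Definition path_partition (T : finType) (E : {set {set T}}) (P : seq (seq T)) : Prop :=
  [/\ all (is_gpath E) P,
      (forall i j, i < size P -> j < size P -> i != j ->
         [disjoint path_edges (nth [::] P i) & path_edges (nth [::] P j)])
    & \bigcup_(s <- P) path_edges s = E].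

Definition has_pp_of_size (T : finType) (E : {set {set T}}) (n : nat) : bool :=
  if excluded_middle_informative (exists P, path_partition E P /\ size P = n)
  then true else false.

(* pn(G): the least size of a path partition (one always exists with at most
   #|E| paths, namely single edges, so the search bound is harmless). *)
Definition pn (T : finType) (E : {set {set T}}) : nat :=
  find (has_pp_of_size E) (iota 0 #|E|.+1).

Definition cycle_edges (T : finType) (c : seq T) : {set {set T}} :=
  [set pedge p | p in zip c (rot 1 c)].

Definition is_gcycle (T : finType) (E : {set {set T}}) (c : seq T) : bool :=
  [&& uniq c, 2 < size c & all (fun p => pedge p \in E) (zip c (rot 1 c))].

Definition pan_cycle (T : finType) (E : {set {set T}}) (c : seq T) : Prop :=
  is_gcycle E c /\
  exists v, [/\ v \in c, deg E v = 3 &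
                forall w, w \in c -> w != v -> deg E w = 2].

(* Main.v *)
Require Import Defs.
From mathcomp Require Import all_boot.
From mathcomp Require Import zify.
From Stdlib Require Import ClassicalEpsilon.
Set Implicit Arguments. Unset Strict Implicit. Unset Printing Implicit Defensive.

Section Gen.
Variable T : finType.
Implicit Types (s t r : seq T) (E : {set {set T}}).

Definition prs s := zip s (behead s).

Lemma prs_cons x w : prs (x :: w) = if w is y :: _ then (x,y) :: prs w else [::].
Proof. by case: w. Qed.

Lemma mem_prs p s : p \in prs s -> p.1 \in s /\ p.2 \in s.
Proof.
elim: s => [|x w IH] //=; rewrite prs_cons; case: w IH => [|y w'] IH //.
rewrite inE => /orP [/eqP -> | /IH [h1 h2]] /=; first by rewrite !inE !eqxx orbT.
by rewrite !inE; move: h1 h2; rewrite !inE => -> ->; rewrite !orbT.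
Qed.

Lemma prsP a b s : reflect (exists p q, s = p ++ [:: a, b & q]) ((a,b) \in prs s).
Proof.
apply: (iffP idP).
  elim: s => [|x w IH] //; rewrite prs_cons; case: w IH => [|y w'] IH //.
  rewrite inE => /orP [/eqP [-> ->] | /IH [p [q ->]]].
    by exists [::], w'.
  by exists (x :: p), q.
case=> p [q ->]; elim: p => [|z p IH] /=; first by rewrite prs_cons inE eqxx.
by rewrite prs_cons; case: p IH => [|z' p'] IH /=; rewrite inE IH orbT.
Qed.

Lemma prs_rev a b s : (a,b) \in prs s -> (b,a) \in prs (rev s).
Proof.
case/prsP=> p [q ->]; apply/prsP; exists (rev q), (rev p).
by rewrite rev_cat !rev_cons -!cats1 -!catA.
Qed.

Lemma index_succ a b s : uniq s -> (a,b) \in prs s -> index b s = (index a s).+1.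
Proof.
elim: s => [|x w IH] //=; rewrite prs_cons; case: w IH => [|y w'] IH //.
move=> /andP [xn un]; rewrite inE => /orP [/eqP [-> ->] | ab] /=.
  rewrite eqxx; move: xn; rewrite inE negb_or => /andP [xy _].
  by rewrite (negbTE xy) /= eqxx.
have [ha hb] := mem_prs ab.
have xa : (x == a) = false by apply/negbTE; apply: contra xn => /eqP ->.
have xb : (x == b) = false by apply/negbTE; apply: contra xn => /eqP ->.
by rewrite xa xb; rewrite /= in IH; rewrite IH.
Qed.

Lemma prs_neq a b s : uniq s -> (a,b) \in prs s -> a != b.
Proof.
move=> u ab; have := index_succ u ab; apply: contra_eqN => /eqP ->.
by rewrite eq_sym neq_ltn ltnSn orbT.
Qed.

Lemma pred_exists x s : x \in s -> x != head x s -> exists y, (y,x) \in prs s.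
Proof.
elim: s => [|a w IH] //=; rewrite inE => /orP [/eqP -> | xw]; first by rewrite eqxx.
move=> xa; case: w IH xw => [|b w'] IH //= xw.
case: (eqVneq x b) => [-> | xb]; first by exists a; rewrite prs_cons inE eqxx.
have [y hy] := IH xw xb; exists y; by rewrite prs_cons inE hy orbT.
Qed.

Lemma succ_exists x s : x \in s -> x != last x s -> exists z, (x,z) \in prs s.
Proof.
elim: s => [|a w IH] //=; rewrite inE.
case: (eqVneq x a) => [-> _ | xa /= xw].
  case: w IH => [|b w'] IH /=; first by rewrite eqxx.
  by move=> _; exists b; rewrite prs_cons inE eqxx.
case: w IH xw => [|b w'] IH //= xw hl.
have [z hz] := IH xw hl; exists z; by rewrite prs_cons inE hz orbT.
Qed.

Lemma prs_cat x s r : prs ((x :: s) ++ r) = prs (x :: s) ++ prs (last x s :: r).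
Proof.
elim: s x => [|y s IH] x /=; first by [].
by rewrite prs_cons /= (IH y).
Qed.

Lemma imset_cons (U : finType) (f : U * U -> {set T}) p l :
  [set f q | q in p :: l] = f p |: [set f q | q in l].
Proof.
apply/setP=> e; apply/imsetP/setU1P.
  case=> q; rewrite inE => /orP [/eqP -> -> | ql ->]; first by left.
  by right; apply/imsetP; exists q.
case=> [-> | /imsetP [q ql ->]]; first by exists p; rewrite ?inE ?eqxx.
by exists q; rewrite // inE ql orbT.
Qed.

Lemma path_edgesE s : path_edges s = [set pedge p | p in prs s].
Proof. by []. Qed.

Lemma in_pedge x (p : T * T) : (x \in pedge p) = (x == p.1) || (x == p.2).
Proof. by rewrite /pedge in_set2. Qed.

Lemma path_edges_vert s e x : e \in path_edges s -> x \in e -> x \in s.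
Proof.
case/imsetP=> p /mem_prs [h1 h2] ->; rewrite in_pedge.
by case/orP=> /eqP ->.
Qed.

Lemma path_edges_cons2 a b w :
  path_edges [:: a, b & w] = pedge (a,b) |: path_edges (b :: w :> seq T).
Proof. by rewrite !path_edgesE prs_cons imset_cons. Qed.

Lemma card_path_edges s : uniq s -> #|path_edges s| = (size s).-1.
Proof.
elim: s => [|a w IH] /=.
  by move=> _; rewrite path_edgesE /prs /=; apply/eqP; rewrite cards_eq0;
     apply/eqP/setP=> e; rewrite inE; apply/imsetP; case.
case: w IH => [|b w'] IH.
  by move=> _; rewrite path_edgesE /prs /=; apply/eqP; rewrite cards_eq0;
     apply/eqP/setP=> e; rewrite inE; apply/imsetP; case.
move=> /andP [an un]; rewrite path_edges_cons2 cardsU1 IH //=.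
suff -> : pedge (a, b) \notin path_edges (b :: w') by [].
apply/negP=> h; have := path_edges_vert h (_ : a \in pedge (a,b)).
by rewrite in_pedge eqxx (negbTE an) => /(_ isT).
Qed.

Lemma rev_path_edges s : path_edges (rev s) = path_edges s.
Proof.
have H : forall s, path_edges (rev s) \subset path_edges s.
  move=> s'; apply/subsetP=> e /imsetP [[a b] ab ->].
  apply/imsetP; exists (b,a); first by rewrite -(revK s'); apply: prs_rev.
  by rewrite /pedge /= setUC.
by apply/eqP; rewrite eqEsubset H /= -{1}(revK s) H.
Qed.

Lemma rev_gpath E s : is_gpath E s -> is_gpath E (rev s).
Proof.
case/and3P=> u sz al; apply/and3P; split; rewrite ?rev_uniq ?size_rev //.
apply/allP=> [[a b]] ab; have := prs_rev ab; rewrite revK => ba.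
have := allP al _ ba; by rewrite /pedge /= setUC.
Qed.

Lemma mixed_pair (a : pred T) s : has a s -> has (predC a) s ->
  exists2 p, p \in prs s & a p.1 != a p.2.
Proof.
elim: s => [|x w IH] //=.
case: w IH => [|y w'] IH.
  by rewrite /= !orbF => ax; rewrite /= ax.
case: (boolP (a x == a y)) => [/eqP axy | nxy]; last first.
  by move=> _ _; exists (x,y); rewrite // prs_cons inE eqxx.
move=> h1 h2.
have h1' : has a (y :: w') by move: h1; rewrite /= axy orbA orbb.
have h2' : has (predC a) (y :: w') by move: h2; rewrite /= axy orbA orbb.
have [p hp hq] := IH h1' h2'; exists p => //; by rewrite prs_cons inE hp orbT.
Qed.

Lemma vert_in_pair x s : x \in s -> 1 < size s ->
  exists2 p, p \in prs s & (x == p.1) || (x == p.2).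
Proof.
elim: s => [|a w IH] //=; case: w IH => [|b w'] IH //=.
rewrite inE; case: (eqVneq x a) => [-> _ _| xa /= xw _].
  by exists (a,b); rewrite ?prs_cons ?inE ?eqxx.
case: w' IH xw => [|c w''] IH xw.
  by move: xw; rewrite inE => /eqP ->; exists (a,b); rewrite ?prs_cons ?inE ?eqxx ?orbT.
have [p hp hq] := IH xw isT; exists p => //; by rewrite prs_cons inE hp orbT.
Qed.

Lemma bigcup_seqP (U : finType) (I : eqType) (P : seq I) (F : I -> {set U}) e :
  reflect (exists2 s, s \in P & e \in F s) (e \in \bigcup_(s <- P) F s).
Proof.
elim: P => [|x P IH]; rewrite ?big_nil ?big_cons ?inE.
  by apply: (iffP idP) => //; case.
apply: (iffP orP).
  case=> [h | /IH [s hs he]]; first by exists x; rewrite ?inE ?eqxx.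
  by exists s; rewrite ?inE ?hs ?orbT.
case=> s; rewrite inE => /orP [/eqP -> | hs] he; first by left.
by right; apply/IH; exists s.
Qed.


Lemma pedgeC (a b : T) : pedge (a,b) = pedge (b,a).
Proof. by rewrite /pedge /= setUC. Qed.

Section Filt.
Variables (E : {set {set T}}) (P : pred T) (v : T).
Hypothesis hcl : forall x y, pedge (x,y) \in E -> P x -> y = v \/ P y.
Hypothesis nPv : ~~ P v.

Lemma block b t : P b -> v \notin b :: t ->
  all (fun p => pedge p \in E) (prs (b :: t)) -> all P (b :: t).
Proof.
elim: t b => [|c t IH] b; first by rewrite /= => ->.
move=> Pb; rewrite inE negb_or => /andP [vb vct].
rewrite prs_cons /= => /andP [ebc al].
have [cv|Pc] := hcl ebc Pb.
  by move: vct; rewrite cv inE eqxx.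
by rewrite Pb; apply: IH.
Qed.

Lemma filter_prs s : uniq s -> all (fun p => pedge p \in E) (prs s) ->
  prs [seq x <- s | ~~ P x] = [seq p <- prs s | ~~ P p.1 && ~~ P p.2].
Proof.
elim: s => [|a t IH] //; rewrite cons_uniq => /andP [aT ut].
rewrite prs_cons; case: t IH aT ut => [|b t'] IH aT ut.
  by move=> _ /=; case: (P a).
rewrite /= => /andP [eab al].
have IH' := IH ut al.
case: (boolP (P a)) => Pa /=.
  by rewrite IH'.
case: (boolP (P b)) => Pb /=; last first.
  by move: IH'; rewrite /= Pb /= => <-; rewrite prs_cons.
have av : a = v.
  rewrite pedgeC in eab; have [//|Pa'] := hcl eab Pb.
  by rewrite Pa' in Pa.
have allb : all P (b :: t') by apply: block => //; rewrite -av.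
move: IH'; rewrite /= Pb /=.
have -> : [seq x <- t' | ~~ P x] = [::].
  apply/eqP; rewrite -[_ == _]negbK -has_filter; apply/hasPn => x xt.
  by rewrite /= negbK; move: allb => /= /andP [_ /allP]; apply.
by move=> <-.
Qed.

End Filt.


Definition disjr : rel (seq T) :=
  fun s t => [disjoint path_edges s & path_edges t].

Lemma disjr_sym : symmetric disjr.
Proof. by move=> s t; rewrite /disjr disjoint_sym. Qed.

Lemma ppE E P : path_partition E P <->
  [/\ all (is_gpath E) P, pairwise disjr P & \bigcup_(s <- P) path_edges s = E].
Proof.
split.
  case=> h1 h2 h3; split => //; apply/(pairwiseP [::]) => i j hi hj ij.
  by apply: h2 => //; rewrite neq_ltn ij.
case=> h1 /(pairwiseP [::]) h2 h3; split => // i j hi hj; rewrite neq_ltn.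
case/orP => ij; first by apply: h2.
by rewrite disjoint_sym; apply: h2.
Qed.

Lemma gpath_edge E s : is_gpath E s -> 0 < #|path_edges s|.
Proof.
case/and3P => u sz _; rewrite card_path_edges //.
by case: s sz {u} => [|a [|b w]].
Qed.

Lemma pp_size E P : all (is_gpath E) P -> pairwise disjr P ->
  size P <= #|\bigcup_(s <- P) path_edges s|.
Proof.
elim: P => [|x P IH]; first by rewrite big_nil. rewrite pairwise_cons big_cons /=.
move=> /andP [gx gP] /andP [dx dP].
have dis : [disjoint path_edges x & \bigcup_(s <- P) path_edges s].
  rewrite -setI_eq0; apply/eqP/setP=> e; rewrite !inE.
  apply/negP=> /andP [ex]; case/bigcup_seqP => s sP es.
  have := allP dx s sP; rewrite /disjr -setI_eq0 => /eqP /setP /(_ e).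
  by rewrite !inE ex es.
have := (leq_card_setU (path_edges x) (\bigcup_(s <- P) path_edges s)).2.
rewrite dis => /eqP ->.
have := gpath_edge gx; have := IH gP dP.
by move=> h1 h2; rewrite -add1n leq_add.
Qed.

Lemma has_ppP E n :
  reflect (exists P, path_partition E P /\ size P = n) (has_pp_of_size E n).
Proof.
rewrite /has_pp_of_size; case: excluded_middle_informative => h.
  by apply: ReflectT.
by apply: ReflectF.
Qed.

Lemma pn_le E P : path_partition E P -> pn E <= size P.
Proof.
move=> pp; have := pp; case/ppE => h1 h2 h3.
have sz := pp_size h1 h2; rewrite h3 in sz.
rewrite /pn leqNgt; apply/negP => lt.
have := before_find 0 lt; rewrite nth_iota ?ltnS // add0n.
by move/negbT/negP; apply; apply/has_ppP; exists P.
Qed.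

Lemma pn_ex E : simple_edges E -> exists P, path_partition E P /\ size P = pn E.
Proof.
move=> se.
pose P0 := [seq enum e | e : {set T} <- enum E].
have ge : forall e, e \in E -> path_edges (enum e) = [set e].
  move=> e eE; have := se e eE; rewrite cardE.
  case H: (enum e) => [|x [|y [|z w]]] //= _.
  rewrite path_edgesE /prs /= imset_cons.
  have -> : [set pedge p | p in [::]] = set0 :> {set {set T}}.
    by apply/setP=> f; rewrite inE; apply/imsetP; case.
  rewrite setU0; congr [set _]; apply/setP=> z; rewrite /pedge in_set2 /=.
  by rewrite -mem_enum H !inE.
have gp : forall e, e \in E -> is_gpath E (enum e).
  move=> e eE; apply/and3P; split; first exact: enum_uniq.
    by rewrite -cardE se.
  apply/allP=> p pp; have : pedge p \in path_edges (enum e) by apply/imsetP; exists p.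
  by rewrite ge // inE => /eqP ->.
have pp : path_partition E P0.
  apply/ppE; split.
  - by apply/allP=> s /mapP [e eE ->]; apply: gp; rewrite -mem_enum.
  - rewrite pairwise_map; have := enum_uniq (mem E); rewrite uniq_pairwise.
    apply: (@sub_in_pairwise _ (mem (enum E))); last by apply/allP=> e; exact.
    move=> e f; rewrite !mem_enum => eE fE /= ef.
    by rewrite /disjr !ge // disjoints1 in_set1; exact: ef.
  - apply/setP=> e; apply/bigcup_seqP/idP.
      case=> s /mapP [f fE ->]; rewrite mem_enum in fE.
      by rewrite ge // inE => /eqP ->.
    by move=> eE; exists (enum e); [apply/mapP; exists e; rewrite ?mem_enum | rewrite ge ?inE].
have sP0 : size P0 = #|E| by rewrite size_map cardE.
have hh : has (has_pp_of_size E) (iota 0 #|E|.+1).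
  apply/hasP; exists #|E|; first by rewrite mem_iota add0n ltnS leqnn.
  by apply/has_ppP; exists P0.
have := nth_find 0 hh; rewrite has_find size_iota in hh.
rewrite nth_iota // add0n => /has_ppP [P [h1 h2]]; exists P; split => //.
Qed.


Lemma zip_rot1 (a b : seq T) : size a = size b -> zip (rot 1 a) (rot 1 b) = rot 1 (zip a b).
Proof.
case: a => [|x a]; case: b => [|y b] //= [h].
by rewrite !rot1_cons zip_rcons // rot1_cons.
Qed.

Lemma zip_rot n (a b : seq T) : size a = size b -> n <= size a ->
  zip (rot n a) (rot n b) = rot n (zip a b).
Proof.
move=> hs; elim: n => [|n IH] hn; first by rewrite !rot0.
rewrite (rotS hn) (rotS (_ : n < size b)) -?hs //.
rewrite (rotS (_ : n < size (zip a b))); last by rewrite size_zip -hs minnn.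
by rewrite zip_rot1 ?size_rot // IH // ltnW.
Qed.

Lemma cycle_edges_rot n (c : seq T) : n <= size c -> cycle_edges (rot n c) = cycle_edges c.
Proof.
move=> hn; rewrite /cycle_edges rot_rot zip_rot ?size_rot //.
apply/setP=> e; apply/imsetP/imsetP; case=> p hp ->; exists p => //.
  by rewrite -(mem_rot n).
by rewrite mem_rot.
Qed.

Lemma zip_cons_rcons (x : T) r (y : T) : zip (x :: r) (rcons r y) = rcons (prs (x :: r)) (last x r, y).
Proof.
elim: r x => [|a r IH] x //=.
by rewrite IH.
Qed.

Lemma cycle_edges_cons (v : T) r :
  cycle_edges (v :: r) = path_edges (v :: r) :|: [set pedge (last v r, v)].
Proof.
rewrite /cycle_edges rot1_cons zip_cons_rcons path_edgesE.
apply/setP=> e; rewrite inE; apply/imsetP/orP.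
  case=> p; rewrite mem_rcons inE => /orP [/eqP -> -> | hp ->].
    by right; rewrite inE.
  by left; apply/imsetP; exists p.
case=> [/imsetP [p hp ->] | ]; first by exists p; rewrite // mem_rcons inE hp orbT.
by rewrite inE => /eqP ->; exists (last v r, v); rewrite // mem_rcons inE eqxx.
Qed.

Lemma gpath_sub E s : is_gpath E s -> path_edges s \subset E.
Proof.
case/and3P=> _ _ al; apply/subsetP=> e /imsetP [p hp ->]; exact: (allP al).
Qed.

Lemma gpath_mono E (F : {set {set T}}) s : E \subset F -> is_gpath E s -> is_gpath F s.
Proof.
move=> EF /and3P [u sz al]; apply/and3P; split => //.
by apply/allP=> p hp; apply: (subsetP EF); apply: (allP al).
Qed.

Lemma prs_size (p : T * T) s : p \in prs s -> 1 < size s.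
Proof. by case: s => [|a [|b w]]. Qed.

Lemma pe_size e s : e \in path_edges s -> 1 < size s.
Proof. by case/imsetP=> p /prs_size. Qed.

Lemma pe_cat (a : T) w r : path_edges ((a :: w) ++ r) =
  path_edges (a :: w) :|: path_edges (last a w :: r).
Proof.
rewrite !path_edgesE prs_cat; apply/setP=> e; rewrite inE.
apply/imsetP/orP.
  by case=> p; rewrite mem_cat => /orP [hp|hp] ->; [left|right]; apply/imsetP; exists p.
by case=> /imsetP [p hp ->]; exists p; rewrite // mem_cat hp ?orbT.
Qed.

Lemma pw_mid (rr : rel (seq T)) Q1 s Q2 : symmetric rr ->
  pairwise rr (Q1 ++ s :: Q2) -> all (rr s) (Q1 ++ Q2) /\ pairwise rr (Q1 ++ Q2).
Proof.
move=> sym; rewrite pairwise_cat pairwise_cons allrel_consr.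
case/and3P=> /andP [h1 h2] h3 /andP [h4 h5]; split.
  rewrite all_cat h4 andbT; apply/allP=> x hx; rewrite sym; exact: (allP h1).
by rewrite pairwise_cat h2 h3 h5.
Qed.

End Gen.


Lemma card3 (U : finType) (a b c : U) : a != b -> a != c -> b != c -> #|[set a; b; c]| = 3.
Proof.
move=> ab ac bc.
have -> : [set a; b; c] = a |: [set b; c] by apply/setP=> x; rewrite !inE orbA.
rewrite cardsU1 cards2 bc in_set2 negb_or ab ac.
by [].
Qed.

Lemma card4 (U : finType) (a b c d : U) : a != b -> a != c -> a != d ->
  b != c -> b != d -> c != d -> #|[set a; b; c; d]| = 4.
Proof.
move=> ab ac ad bc bd cd.
have -> : [set a; b; c; d] = a |: [set b; c; d] by apply/setP=> x; rewrite !inE !orbA.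
rewrite cardsU1 card3 // !inE !negb_or ab ac ad.
by [].
Qed.

Lemma arith1 (S F K X Cc R : nat) : X + (F - 1) = S - 1 -> Cc <= X -> F + K = S ->
  K <= R -> 1 < F -> Cc = R.+1 -> False.
Proof. lia. Qed.

Lemma arith2 (a b : nat) : a = b.+1 -> b = a.+1 -> False.
Proof. lia. Qed.

Lemma arith3 (a b p q : nat) : p <= (a + b).+2 -> a + b.+1 = q -> p <= q + 1.
Proof. lia. Qed.

Section Main.
Variables (T : finType) (E : {set {set T}}) (v : T) (r : seq T).
Hypothesis se : simple_edges E.
Hypothesis ur : uniq (v :: r).
Hypothesis szr : 1 < size r.
Hypothesis CE : cycle_edges (v :: r) \subset E.
Hypothesis dv : deg E v = 3.
Hypothesis dr : forall w, w \in r -> deg E w = 2.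

Local Notation C := (cycle_edges (v :: r)).
Local Notation ea := (pedge (v, head v r)).
Local Notation eb := (pedge (last v r, v)).

Lemma vr : v \notin r.
Proof. by case/andP: ur. Qed.

Lemma edge_neq a b : pedge (a,b) \in E -> a != b.
Proof. by move/se; rewrite /pedge cards2; case: (a != b). Qed.

Lemma last_in : last v r \in r.
Proof. by case: r szr => [|h r'] //= _; apply: mem_last. Qed.

Lemma last_neq_head : last v r != head v r.
Proof.
move: ur szr; case: r => [|h [|h' r']] //= /andP [_ /andP [hn _]] _.
apply: contraNneq hn => <-; exact: mem_last.
Qed.

Lemma pe_vr : path_edges (v :: r) = ea |: path_edges r.
Proof. by case: r szr => [|h r'] // _; rewrite path_edges_cons2. Qed.

Lemma v_notin_per e : e \in path_edges r -> v \notin e.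
Proof. move=> he; apply/negP => /(path_edges_vert he); exact/negP/vr. Qed.

Lemma ea_neq_eb : ea != eb.
Proof.
apply/negP=> /eqP h; have : last v r \in eb by rewrite in_pedge eqxx.
rewrite -h in_pedge /= (negbTE last_neq_head) orbF => /eqP hl.
by have := last_in; rewrite hl (negbTE vr).
Qed.

Lemma eb_notin_pe : eb \notin path_edges (v :: r).
Proof.
rewrite pe_vr in_setU1 negb_or eq_sym ea_neq_eb /=.
apply/negP=> h; have := v_notin_per h; by rewrite in_pedge eqxx orbT.
Qed.

Lemma eaC : ea \in C.
Proof. by rewrite cycle_edges_cons in_setU pe_vr in_setU1 eqxx. Qed.

Lemma ebC : eb \in C.
Proof. by rewrite cycle_edges_cons in_setU in_set1 eqxx orbT. Qed.

Lemma C_vert e x : e \in C -> x \in e -> x \in v :: r.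
Proof.
rewrite cycle_edges_cons inE => /orP [he|]; first exact: path_edges_vert.
rewrite inE => /eqP -> ; rewrite in_pedge => /orP [] /eqP ->.
  by rewrite inE last_in orbT.
by rewrite inE eqxx.
Qed.

Lemma C_v e : e \in C -> v \in e -> e = ea \/ e = eb.
Proof.
rewrite cycle_edges_cons inE pe_vr !inE => /orP [/orP [/eqP -> | he] | /eqP ->];
  try by [left | right].
by move=> hv; have := v_notin_per he; rewrite hv.
Qed.

Lemma degsub x (A : {set {set T}}) : A \subset [set e in E | x \in e] -> #|A| <= deg E x.
Proof. exact: subset_leq_card. Qed.

Lemma F2 x e : x \in r -> e \in E -> x \in e -> e \in C.
Proof.
move=> xr eE xe.
have xv : x != v by apply: contraNneq vr => <-.
have xs : x \in v :: r by rewrite inE xr orbT.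
have [y yx] := pred_exists xs xv.
have e1C : pedge (y,x) \in C.
  by rewrite cycle_edges_cons inE; apply/orP; left; apply/imsetP; exists (y,x).
have [e2 [e2C xe2 ne]] : exists e2, [/\ e2 \in C, x \in e2 & pedge (y,x) != e2].
  case: (eqVneq x (last v r)) => [xl | xl].
    exists eb; split; [exact: ebC | by rewrite in_pedge -xl eqxx |].
    apply/negP => /eqP h; have : v \in pedge (y,x) by rewrite h in_pedge eqxx orbT.
    rewrite in_pedge /= [v == x]eq_sym (negbTE xv) orbF => /eqP yv.
    rewrite -yv in yx; have := index_succ ur yx; rewrite xl (index_last ur) /= eqxx => hs.
    by move: szr; rewrite hs.
  have [z xz] := succ_exists xs xl.
  exists (pedge (x,z)); split.
  - by rewrite cycle_edges_cons inE; apply/orP; left; apply/imsetP; exists (x,z).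
  - by rewrite in_pedge eqxx.
  - apply/negP => /eqP h; have : z \in pedge (y,x) by rewrite h in_pedge eqxx orbT.
    rewrite in_pedge /= [z == x]eq_sym (negbTE (prs_neq ur xz)) orbF => /eqP zy.
    have := index_succ ur yx; have := index_succ ur xz; rewrite zy; exact: arith2.
apply/negPn/negP => eC.
have : #|[set pedge (y,x); e2; e]| <= deg E x.
  apply: degsub; apply/subsetP => f; rewrite !inE -orbA => /or3P [] /eqP ->.
  - by rewrite (subsetP CE _ e1C) in_pedge eqxx orbT.
  - by rewrite (subsetP CE _ e2C) xe2.
  - by rewrite eE xe.
rewrite card3 ?dr //.
- by apply: contraNneq eC => <-.
- by apply: contraNneq eC => <-.
Qed.


Lemma clos x y : pedge (x,y) \in E -> x \in r -> y = v \/ y \in r.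
Proof.
move=> hE xr; have := F2 xr hE; rewrite in_pedge eqxx => /(_ isT) hC.
have := C_vert hC (_ : y \in pedge (x,y)); rewrite in_pedge eqxx orbT inE.
by move=> /(_ isT) /orP [/eqP ->|->]; [left|right].
Qed.

Lemma charC p : pedge p \in E -> (pedge p \in C) = (p.1 \in r) || (p.2 \in r).
Proof.
case: p => a b /= hE; apply/idP/idP; last first.
  by case/orP => h; apply: (F2 h hE); rewrite in_pedge eqxx ?orbT.
move=> hC; apply/negPn/negP; rewrite negb_or => /andP [ar br].
have := C_vert hC (_ : a \in pedge (a,b)); rewrite in_pedge eqxx inE (negbTE ar) orbF.
have := C_vert hC (_ : b \in pedge (a,b)); rewrite in_pedge eqxx orbT inE (negbTE br) orbF.
move=> /(_ isT) /eqP bv /(_ isT) /eqP av.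
by have := edge_neq hE; rewrite av bv eqxx.
Qed.

Lemma vE : exists e0, [/\ e0 \in E, v \in e0 & e0 \notin C].
Proof.
have [/existsP [e0 /and3P [h1 h2 h3]] | /existsPn h] :=
  boolP [exists e0, [&& e0 \in E, v \in e0 & e0 \notin C]].
  by exists e0.
have : deg E v <= #|[set ea; eb]|.
  apply: subset_leq_card; apply/subsetP => e; rewrite inE => /andP [eE ve].
  have := h e; rewrite eE ve /= negbK => eC.
  by case: (C_v eC ve) => ->; rewrite !inE eqxx ?orbT.
by rewrite dv cards2; case: (_ != _).
Qed.

Lemma vuniq e f : e \in E -> f \in E -> v \in e -> v \in f -> e \notin C -> f \notin C -> e = f.
Proof.
move=> eE fE ve vf eC fC; apply/eqP/negPn/negP => ef.
have : #|[set ea; eb; e; f]| <= deg E v.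
  apply: degsub; apply/subsetP => g; rewrite !inE -!orbA => /or4P [] /eqP ->.
  - by rewrite (subsetP CE _ eaC) in_pedge eqxx.
  - by rewrite (subsetP CE _ ebC) in_pedge eqxx orbT.
  - by rewrite eE ve.
  - by rewrite fE vf.
rewrite card4 ?dv ?ea_neq_eb //.
- by apply: contraNneq eC => <-; exact: eaC.
- by apply: contraNneq fC => <-; exact: eaC.
- by apply: contraNneq eC => <-; exact: ebC.
- by apply: contraNneq fC => <-; exact: ebC.
Qed.

Definition fl (s : seq T) := [seq x <- s | x \notin r].

Lemma key s : is_gpath E s -> path_edges (fl s) = path_edges s :\: C.
Proof.
case/and3P => us _ al.
have H := @filter_prs T E (fun x => x \in r) v (fun x y h xr => clos h xr) s us al.
rewrite /fl path_edgesE H; apply/setP => e; rewrite inE.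
apply/imsetP/andP.
  case=> p; rewrite mem_filter => /andP [/andP [h1 h2] hp] ->.
  split; last by apply/imsetP; exists p.
  by rewrite charC ?(allP al) // negb_or h1 h2.
case=> eC /imsetP [p hp ep]; exists p => //; rewrite mem_filter hp andbT.
by move: eC; rewrite ep charC ?(allP al) // negb_or.
Qed.


Lemma E'simple : simple_edges (E :\: C).
Proof. by move=> e; rewrite inE => /andP [_ /se]. Qed.

Lemma lower : pn (E :\: C) + 1 <= pn E.
Proof.
have [Q [ppQ szQ]] := pn_ex se.
have ppQ2 := ppQ; case/ppE: ppQ2 => gQ pwQ uQ.
case: ppQ => _ idx _.
have gQs : forall s, s \in Q -> is_gpath E s by move=> s; apply: (allP gQ).
pose Q' := [seq t <- map fl Q | 1 < size t].
have ppQ' : path_partition (E :\: C) Q'.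
  apply/ppE; split.
  - apply/allP => t; rewrite mem_filter => /andP [st /mapP [s sQ tE]]; subst t.
    have gs := gQs s sQ.
    apply/and3P; split => //.
      by apply: filter_uniq; case/and3P: gs.
    apply/allP => p hp; have : pedge p \in path_edges (fl s) by apply/imsetP; exists p.
    rewrite key // !inE => /andP [-> pe] /=; exact: (subsetP (gpath_sub gs) _ pe).
  - apply: pairwise_filter; rewrite pairwise_map.
    have hall : all (mem Q) Q by apply/allP.
    apply: (sub_in_pairwise _ hall pwQ).
    move=> s1 s2 h1 h2 d /=; rewrite /disjr.
    apply: (disjointWl _ (disjointWr _ d)); rewrite key ?gQs //; exact: subsetDl.
  - apply/setP => e; apply/bigcup_seqP/idP.
      case=> t; rewrite mem_filter => /andP [_ /mapP [s sQ ->]].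
      rewrite key ?gQs // !inE => /andP [-> es] /=.
      by rewrite -uQ; apply/bigcup_seqP; exists s.
    rewrite inE => /andP [eC eE]; move: eE; rewrite -uQ => /bigcup_seqP [s sQ es].
    exists (fl s); last by rewrite key ?gQs // inE eC.
    rewrite mem_filter map_f // andbT; apply: (@pe_size _ e).
    by rewrite key ?gQs // inE eC.
have := pn_le ppQ'; suff : size Q' < size Q by rewrite szQ; move=> h1 h2; apply: leq_trans h1; rewrite addn1 ltnS.
rewrite size_filter -(size_map fl Q) -(count_predC (fun t => 1 < size t)).
rewrite -{1}(addn0 (count _ _)) ltn_add2l.
rewrite -has_count; apply/negPn/negP => /hasPn H0.
have H : forall s, s \in Q -> 1 < size (fl s).
  by move=> s sQ; have := H0 _ (map_f fl sQ); rewrite /= negbK.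
have cl1 : forall s e, s \in Q -> e \in path_edges s -> e \in C ->
    exists e', [/\ e' \in path_edges s, e' \in E, v \in e' & e' \notin C].
  move=> s e sQ es eC; have gs := gQs s sQ.
  have al : all (fun p => pedge p \in E) (prs s) by case/and3P: gs.
  case/imsetP: es => p ps ep.
  have hr : has (fun x => x \in r) s.
    move: eC; rewrite ep charC ?(allP al) //; have [p1 p2] := mem_prs ps.
    by case/orP => h; apply/hasP; [exists p.1 | exists p.2].
  have hnr : has (predC (fun x => x \in r)) s.
    rewrite has_filter; apply/eqP => h0; have := H s sQ.
    by rewrite /fl; move: h0; rewrite /predC /= => ->.
  have [[a b] pab /= ne] := mixed_pair hr hnr.
  have eab := allP al _ pab; have [as_ bs] := mem_prs pab.
  have vs : v \in s.
    case: (boolP (a \in r)) ne => ar ne.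
      have br : b \notin r by move: ne; case: (b \in r).
      by case: (clos eab ar) => [<- //|]; rewrite (negbTE br).
    have br : b \in r by move: ne; case: (b \in r).
    rewrite pedgeC in eab.
    by case: (clos eab br) => [<- //|]; rewrite (negbTE ar).
  have vfl : v \in fl s by rewrite mem_filter vr.
  have [p'' hp'' vp] := vert_in_pair vfl (H s sQ).
  have : pedge p'' \in path_edges (fl s) by apply/imsetP; exists p''.
  rewrite key // inE => /andP [nC pe]; exists (pedge p''); split => //.
    exact: (subsetP (gpath_sub gs) _ pe).
  by rewrite in_pedge.
have cl3 : forall s1 s2 e, s1 \in Q -> s2 \in Q -> e \in path_edges s1 ->
    e \in path_edges s2 -> s1 = s2.
  move=> s1 s2 e h1 h2 e1 e2; apply/eqP/negPn/negP => ne.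
  have ij : index s1 Q != index s2 Q.
    apply: contra ne => /eqP /(congr1 (nth [::] Q)); rewrite !nth_index // => ->.
    by [].
  have := idx (index s1 Q) (index s2 Q); rewrite !index_mem !nth_index //.
  move=> /(_ h1 h2 ij); rewrite -setI_eq0 => /eqP /setP /(_ e); rewrite !inE e1 e2.
  by [].
have eb0 : eb \in E := subsetP CE _ ebC.
move: eb0; rewrite -uQ => /bigcup_seqP [s0 s0Q ebs0].
have [e2 [e2s0 e2E ve2 e2C]] := cl1 _ _ s0Q ebs0 ebC.
have Csub : C \subset path_edges s0.
  apply/subsetP => e eC; have := subsetP CE _ eC; rewrite -uQ => /bigcup_seqP [s sQ es].
  have [e1 [e1s e1E ve1 e1C]] := cl1 _ _ sQ es eC.
  have h := vuniq e1E e2E ve1 ve2 e1C e2C.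
  have ss0 : s = s0 by apply: (cl3 _ _ _ sQ s0Q e1s); rewrite h.
  by rewrite -ss0.
have gs0 := gQs s0 s0Q; have us0 : uniq s0 by case/and3P: gs0.
have hC : #|C| = (size r).+1.
  by rewrite cycle_edges_cons setUC cardsU1 eb_notin_pe card_path_edges.
have h1 := cardsID C (path_edges s0).
rewrite -key // card_path_edges ?card_path_edges // in h1; last exact: filter_uniq.
have h2 : #|C| <= #|path_edges s0 :&: C|.
  by apply: subset_leq_card; rewrite subsetI Csub subxx.
have h3 : size (fl s0) + count (fun x => x \in r) s0 = size s0.
  by rewrite /fl size_filter addnC; exact: count_predC.
have h4 : count (fun x => x \in r) s0 <= size r.
  rewrite -size_filter; apply: uniq_leq_size; first exact: filter_uniq.
  by move=> x; rewrite mem_filter => /andP [].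
have h5 := H s0 s0Q.
move: h1; rewrite -!subn1 => h1.
exact: (arith1 h1 h2 h3 h4 h5 hC).
Qed.


Lemma disj_helper (U : finType) (A B : {set U}) :
  (forall e, e \in A -> e \in B -> False) -> [disjoint A & B].
Proof.
move=> h; rewrite -setI_eq0; apply/eqP/setP => e; rewrite in_setI in_set0.
by apply/negP => /andP [h1 h2]; case: (h e h1 h2).
Qed.

Lemma pe_single (x : T) : path_edges [:: x] = set0.
Proof. by apply/setP => e; rewrite inE; apply/imsetP; case. Qed.

Lemma upper : pn E <= pn (E :\: C) + 1.
Proof.
have [Q [ppQ szQ]] := pn_ex E'simple.
case/ppE: ppQ => gQ pwQ uQ.
have gQs : forall s, s \in Q -> is_gpath (E :\: C) s by move=> s; apply: (allP gQ).
have [e0 [e0E ve0 e0C]] := vE.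
have : e0 \in \bigcup_(s <- Q) path_edges s by rewrite uQ inE e0C e0E.
case/bigcup_seqP => s sQ e0s.
have gs := gQs s sQ.
have vs : v \in s := path_edges_vert e0s ve0.
have us : uniq s by case/and3P: gs.
have vend : v = head v s \/ v = last v s.
  case: (eqVneq v (head v s)) => [h|hh]; first by left.
  case: (eqVneq v (last v s)) => [h|hl]; first by right.
  exfalso.
  have [y yv] := pred_exists vs hh; have [z vz] := succ_exists vs hl.
  have yz : y != z.
    apply/eqP => yz; have := index_succ us yv; have := index_succ us vz; rewrite yz; exact: arith2.
  have s1 : pedge (y,v) \in E :\: C.
    by apply: (subsetP (gpath_sub gs)); apply/imsetP; exists (y,v).
  have s2 : pedge (v,z) \in E :\: C.
    by apply: (subsetP (gpath_sub gs)); apply/imsetP; exists (v,z).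
  move: s1 s2; rewrite !inE => /andP [c1 E1] /andP [c2 E2].
  have h := vuniq E1 E2 (_ : v \in pedge (y,v)) (_ : v \in pedge (v,z)) c1 c2.
  have : z \in pedge (y,v) by rewrite h ?in_pedge ?eqxx ?orbT.
  rewrite in_pedge /= [z == v]eq_sym (negbTE (prs_neq us vz)) orbF => /eqP zy.
  by rewrite zy eqxx in yz.
have [s' [gs' pes' ls' ns']] : exists s', [/\ is_gpath (E :\: C) s',
    path_edges s' = path_edges s, last v s' = v & 1 < size s'].
  have sz : 1 < size s by case/and3P: gs.
  case: vend => h; last by exists s.
  exists (rev s); split; [exact: rev_gpath | exact: rev_path_edges | | by rewrite size_rev].
  by move: h sz; case: (s) => [|a w] //= -> _; rewrite rev_cons last_rcons.
have [Q1 [Q2 QE]] : exists Q1 Q2, Q = Q1 ++ s :: Q2.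
  by case/splitPr: sQ => Q1 Q2; exists Q1, Q2.
rewrite QE in pwQ uQ szQ gQs.
have [ds pwr] := pw_mid (@disjr_sym T) pwQ.
set rest := Q1 ++ Q2.
have rE : forall t, t \in rest -> path_edges t \subset E :\: C.
  by move=> t ht; apply: gpath_sub; apply: gQs; rewrite mem_cat inE; move: ht;
     rewrite mem_cat => /orP [] ->; rewrite ?orbT.
have hU : forall e, (e \in E :\: C) =
    (e \in path_edges s) || (e \in \bigcup_(t <- rest) path_edges t).
  move=> e; rewrite -uQ; apply/bigcup_seqP/orP.
    case=> t; rewrite mem_cat inE => /or3P [ht|/eqP ->|ht] he; try by left.
      by right; apply/bigcup_seqP; exists t; rewrite // mem_cat ht.
    by right; apply/bigcup_seqP; exists t; rewrite // mem_cat ht orbT.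
  case=> [he | /bigcup_seqP [t]]; first by exists s; rewrite // mem_cat inE eqxx orbT.
  rewrite mem_cat => /orP [] ht he; exists t => //; by rewrite mem_cat inE ht ?orbT.
case: s' gs' pes' ls' ns' => [|a w] // gs' pes' ls' ns'.
have law : last a w = v by [].
set A := (a :: w) ++ r.
set B := [:: last v r; v].
have peA : path_edges A = path_edges s :|: path_edges (v :: r).
  by rewrite /A pe_cat law pes'.
have peB : path_edges B = [set eb].
  by rewrite /B path_edges_cons2 pe_single setU0.
have pvC : path_edges (v :: r) \subset C.
  by rewrite cycle_edges_cons subsetUl.
have ebE : eb \in E := subsetP CE _ ebC.
have lv : last v r != v by apply: contraNneq vr => <-; exact: last_in.
have gA : is_gpath E A.
  apply/and3P; split.
  - rewrite cat_uniq; apply/and3P; split.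
    + by case/and3P: gs'.
    + apply/hasPn => x xr; apply/negP => xs.
      have [p hp xp] := vert_in_pair xs ns'.
      have : pedge p \in E :\: C by apply: (subsetP (gpath_sub gs')); apply/imsetP; exists p.
      rewrite inE => /andP [pC pE]; have := F2 xr pE; rewrite in_pedge xp => /(_ isT).
      by rewrite (negbTE pC).
    + by case/andP: ur.
  - by rewrite size_cat; apply: leq_trans ns' (leq_addr _ _).
  - rewrite /A /= -/(prs ((a :: w) ++ r)) prs_cat all_cat law; apply/andP; split.
      apply/allP => p hp; case/and3P: gs' => _ _ /allP /(_ p hp).
      by rewrite inE => /andP [].
    apply/allP => p hp; apply: (subsetP CE); apply: (subsetP pvC).
    by apply/imsetP; exists p.
have gB : is_gpath E B.
  by rewrite /is_gpath /B /= inE lv ebE.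
have ppN : path_partition E [:: A, B & rest].
  apply/ppE; split.
  - rewrite /= gA gB /=; apply/allP => t ht; apply: (gpath_mono (subsetDl E C)).
    by apply: gQs; move: ht; rewrite !mem_cat inE => /orP [] ->; rewrite ?orbT.
  - rewrite !pairwise_cons pwr andbT /=; apply/andP; split.
    + apply/andP; split.
        rewrite /disjr peA peB; apply: disj_helper => e; rewrite !inE => /orP [he|he] /eqP ee;
          subst e.
          by have := subsetP (gpath_sub gs) _ he; rewrite inE ebC.
        by have := eb_notin_pe; rewrite he.
      apply/allP => t ht; rewrite /disjr peA; apply: disj_helper => e.
      rewrite inE => /orP [he|he] ht'.
        have := allP ds t ht; rewrite /disjr -setI_eq0 => /eqP /setP /(_ e).
        by rewrite !inE he ht'.
      have := subsetP (rE t ht) _ ht'; rewrite inE (subsetP pvC _ he).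
      by [].
    + apply/allP => t ht; rewrite /disjr peB; apply: disj_helper => e.
      rewrite inE => /eqP -> ht'.
      by have := subsetP (rE t ht) _ ht'; rewrite inE ebC.
  - apply/setP => e; rewrite !big_cons peA peB !in_setU in_set1.
    have hE : (e \in E) = (e \in E :\: C) || (e \in C).
      rewrite inE; case: (boolP (e \in C)) => h /=; last by rewrite orbF.
      by rewrite (subsetP CE _ h).
    rewrite hE hU cycle_edges_cons in_setU in_set1.
    by case: (e \in path_edges s); case: (e \in path_edges (v :: r)); case: (e == eb);
       case: (e \in \bigcup_(t <- rest) path_edges t).
have h1 := pn_le ppN; rewrite /= /rest size_cat in h1.
rewrite size_cat /= in szQ.
exact: (arith3 h1 szQ).
Qed.

End Main.

Theorem lemma5 (T : finType) (E : {set {set T}}) (c : seq T) :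
  simple_edges E -> pan_cycle E c ->
  pn E = pn (E :\: cycle_edges c) + 1.
Proof.
move=> se [/and3P [uc szc alc] [v [vc dv dw]]].
have [p [q cE]] : exists p q, c = p ++ v :: q.
  by case/splitPr: vc => p q; exists p, q.
set r := q ++ p.
have rotE : rot (size p) c = v :: r by rewrite cE rot_size_cat.
have CEq : cycle_edges c = cycle_edges (v :: r).
  by rewrite -rotE cycle_edges_rot // cE size_cat leq_addr.
have ur : uniq (v :: r) by rewrite -rotE rot_uniq.
have szr : 1 < size r.
  by move: szc; rewrite -(size_rot (size p)) rotE.
have CE : cycle_edges (v :: r) \subset E.
  rewrite -CEq; apply/subsetP => e /imsetP [x hx ->]; exact: (allP alc).
have dr : forall w, w \in r -> deg E w = 2.
  move=> w wr; apply: dw.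
    by rewrite -(mem_rot (size p)) rotE inE wr orbT.
  by apply: contraNneq (_ : v \notin r) => [<- //|]; case/andP: ur.
rewrite CEq; apply/eqP; rewrite eqn_leq (upper se ur szr CE dv dr).
by rewrite (lower se ur szr CE dv dr).
Qed.
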